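(* Let $\Lambda$ satisfy (RC). There exists a bounded linear operator $I^{\rm h}_2:\dot{\mathscr U}^{1,2}(\Lambda)\to\dot{\mathscr U}^{1,2}(\Lambda^{\rm h})$ and $C>0$ such that $\|DI^{\rm h}_2u\|_{\ell^2_{\mathcal N}(\Lambda^{\rm h})}\le C\|Du\|_{\ell^2_{\mathcal N}(\Lambda)}$ and $I^{\rm h}_2u(\ell)=u(\ell)$ for all $|\ell|>R_{\rm def}$ and all $u\in\dot{\mathscr U}^{1,2}(\Lambda)$. Moreover, there is $c_0\in(0,1]$ such that for every $r>0$ there exists $R\ge r$ with $$\sum_{\ell\in\Lambda^{\rm h}\cap B_r}|DI^{\rm h}_2u(\ell)|_{\mathfrak w,1}\le C\sum_{\ell\in\Lambda\cap B_R}|Du(\ell)|_{\tilde{\mathfrak w},1}$$ for all $\mathfrak w\in\mathscr L_1$ and $u\in\dot{\mathscr U}^{1,2}(\Lambda)$, where $\tilde{\mathfrak w}(t):=\mathfrak w(c_0t)$ (which lies in $\mathscr L_1$).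
   Context: Let $d\in\{2,3\}$, $\mathsf d_s\in\{2,3\}$. $B_R$ is the open ball of radius $R$ at $0$. $A\in\mathbb R^{d\times d}$ nonsingular, $\Lambda^{\rm h}:=A\mathbb Z^d$. A set $\Lambda\subset\mathbb R^d$ satisfies (RC) if there is $R_{\rm def}>0$ with $\Lambda\setminus B_{R_{\rm def}}=\Lambda^{\rm h}\setminus B_{R_{\rm def}}$ and $\Lambda\cap B_{R_{\rm def}}$ finite. For $\Lambda'\in\{\Lambda,\Lambda^{\rm h}\}$ and $\ell\in\Lambda'$: $\Lambda'-\ell:=\{m-\ell:m\in\Lambda'\setminus\{\ell\}\}$; $\mathcal N(\ell)$ is the set of $m\in\Lambda'\setminus\{\ell\}$ for which some $a$ has $|a-\ell|=|a-m|\le|a-k|$ for all $k\in\Lambda'$. For $u:\Lambda'\to\mathbb R^{\mathsf d_s}$: $D_\rho u(\ell):=u(\ell+\rho)-u(\ell)$, $\|Du\|_{\ell^2_{\mathcal N}(\Lambda')}:=(\sum_\ell\sum_{\rho\in\mathcal N(\ell)-\ell}|D_\rho u(\ell)|^2)^{1/2}$, $\dot{\mathscr U}^{1,2}(\Lambda'):=\{u:\|Du\|_{\ell^2_{\mathcal N}(\Lambda')}<\infty\}$. $\mathscr L_1$ is the set of monotonically decreasing $\mathfrak w:[0,\infty)\to(0,\infty)$ with $\|\mathfrak w\|_{L^\infty}+\int_0^\infty r^{d}\mathfrak w(r)dr<\infty$, and $|Du(\ell)|_{\mathfrak w,1}:=\sum_{\rho\in\Lambda'-\ell}\mathfrak w(|\rho|)|D_\rho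 u(\ell)|$. *)

(* Defs.v *)
From Stdlib Require Import Reals Lra List ZArith.
Import ListNotations.
Open Scope R_scope.

(* Vectors of R^n: real sequences vanishing from index n on. *)
Definition RV (n : nat) : Type := {x : nat -> R | forall i, (n <= i)%nat -> x i = 0}.
Definition coord {n} (x : RV n) (i : nat) : R := proj1_sig x i.

Definition sumn (n : nat) (f : nat -> R) : R := fold_right Rplus 0 (map f (seq 0 n)).

Definition rnorm {n} (x : RV n) : R := sqrt (sumn n (fun i => coord x i ^ 2)).
Definition rdist {n} (x y : RV n) : R := sqrt (sumn n (fun i => (coord x i - coord y i) ^ 2)).

Definition vlin {n} (a : R) (x : RV n) (b : R) (y : RV n) : RV n.
Proof.
  exists (fun i => a * coord x i + b * coord y i).
  intros i Hi; unfold coord; rewrite (proj2_sig x i Hi), (proj2_sig y i Hi); ring.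
Defined.

Definition nonsingular (d : nat) (A : nat -> nat -> R) : Prop :=
  forall v : RV d, (forall i, (i < d)%nat -> sumn d (fun j => A i j * coord v j) = 0) ->
    forall j, coord v j = 0.

Definition Lh (d : nat) (A : nat -> nat -> R) (x : RV d) : Prop :=
  exists z : nat -> Z, forall i, (i < d)%nat -> coord x i = sumn d (fun j => A i j * IZR (z j)).

Definition RC (d : nat) (A : nat -> nat -> R) (L : RV d -> Prop) (Rdef : R) : Prop :=
  0 < Rdef /\
  (forall x, Rdef <= rnorm x -> (L x <-> Lh d A x)) /\
  (exists l : list (RV d), forall x, L x -> rnorm x < Rdef -> In x l).

(* Voronoi neighbour m of l in the point set L *)
Definition Nb {d} (L : RV d -> Prop) (l m : RV d) : Prop :=
  L m /\ m <> l /\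
  exists a : RV d, rdist a l = rdist a m /\ forall k, L k -> rdist a l <= rdist a k.

(* The (possibly infinite) sum of the nonnegative f over S is <= M. *)
Definition SumLe {X : Type} (S : X -> Prop) (f : X -> R) (M : R) : Prop :=
  forall l : list X, NoDup l -> Forall S l -> fold_right Rplus 0 (map f l) <= M.

(* ||Du||_{l^2_N(L)} <= N  *)
Definition energy_le {d ds} (L : RV d -> Prop) (u : RV d -> RV ds) (N : R) : Prop :=
  SumLe (fun p : RV d * RV d => L (fst p) /\ Nb L (fst p) (snd p))
        (fun p => rdist (u (snd p)) (u (fst p)) ^ 2) (N ^ 2).

Definition inU {d ds} (L : RV d -> Prop) (u : RV d -> RV ds) : Prop :=
  exists N, energy_le L u N.

(* sum_{l in L cap B_r} |Du(l)|_{w,1} <= M *)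
Definition wsum_le {d ds} (L : RV d -> Prop) (r : R) (w : R -> R) (u : RV d -> RV ds) (M : R)
  : Prop :=
  SumLe (fun p : RV d * RV d => L (fst p) /\ rnorm (fst p) < r /\ L (snd p) /\ snd p <> fst p)
        (fun p => w (rdist (snd p) (fst p)) * rdist (u (snd p)) (u (fst p))) M.

(* the class L_1 (w considered on [0, oo)) *)
Definition L1 (d : nat) (w : R -> R) : Prop :=
  (forall s t, 0 <= s <= t -> w t <= w s) /\
  (forall t, 0 <= t -> 0 < w t) /\
  (exists B, forall t, 0 <= t -> Rabs (w t) <= B) /\
  (exists K, forall T (pr : Riemann_integrable (fun r => r ^ d * w r) 0 T),
      0 <= T -> RiemannInt pr <= K).

(* Main.v *)
Require Import Defs.
From Stdlib Require Import Reals Lra Lia Psatz List ZArith Classical ClassicalEpsilon FunctionalExtensionality ProofIrrelevance.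
Import ListNotations.
Open Scope R_scope.

Lemma fold_Rplus_init a l : fold_right Rplus a l = fold_right Rplus 0 l + a.
Proof. induction l; simpl; [ring| rewrite IHl; ring]. Qed.

Lemma sumn_0 f : sumn 0 f = 0. Proof. reflexivity. Qed.
Lemma sumn_S n f : sumn (S n) f = sumn n f + f n.
Proof. unfold sumn. rewrite seq_S, map_app, fold_right_app. simpl. rewrite fold_Rplus_init. ring. Qed.

Lemma sumn_ext n f g : (forall i, (i < n)%nat -> f i = g i) -> sumn n f = sumn n g.
Proof. induction n; intros H; [reflexivity|]. rewrite !sumn_S, IHn, H; auto. Qed.
Lemma sumn_plus n f g : sumn n (fun i => f i + g i) = sumn n f + sumn n g.
Proof. induction n; [rewrite !sumn_0; ring|]. rewrite !sumn_S, IHn; ring. Qed.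
Lemma sumn_scal n c f : sumn n (fun i => c * f i) = c * sumn n f.
Proof. induction n; [rewrite !sumn_0; ring|]. rewrite !sumn_S, IHn; ring. Qed.
Lemma sumn_zero n : sumn n (fun _ => 0) = 0.
Proof. induction n; [reflexivity|]. rewrite sumn_S, IHn; ring. Qed.
Lemma sumn_le n f g : (forall i, (i < n)%nat -> f i <= g i) -> sumn n f <= sumn n g.
Proof. induction n; intros H; [rewrite !sumn_0; lra|]. rewrite !sumn_S. pose proof (H n ltac:(lia)).
  assert (sumn n f <= sumn n g) by (apply IHn; auto). lra. Qed.
Lemma sumn_nonneg n f : (forall i, (i < n)%nat -> 0 <= f i) -> 0 <= sumn n f.
Proof. intros H. rewrite <- (sumn_zero n). apply sumn_le; auto. Qed.
Lemma sumn_abs n f : Rabs (sumn n f) <= sumn n (fun i => Rabs (f i)).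
Proof. induction n; [rewrite !sumn_0, Rabs_R0; lra|]. rewrite !sumn_S.
  eapply Rle_trans; [apply Rabs_triang|]. lra. Qed.
Lemma sumn_term n f j : (forall i, (i < n)%nat -> 0 <= f i) -> (j < n)%nat -> f j <= sumn n f.
Proof. induction n; intros H Hj; [lia|]. rewrite sumn_S.
  destruct (Nat.eq_dec j n). subst. pose proof (sumn_nonneg n f ltac:(intros; apply H; lia)). lra.
  pose proof (IHn ltac:(intros; apply H; lia) ltac:(lia)). pose proof (H n ltac:(lia)). lra. Qed.
Lemma sumn_swap n m f : sumn n (fun i => sumn m (fun j => f i j)) = sumn m (fun j => sumn n (fun i => f i j)).
Proof. induction n. simpl. rewrite sumn_zero. reflexivity.
  rewrite sumn_S, IHn. rewrite <- sumn_plus. apply sumn_ext. intros. rewrite sumn_S. reflexivity. Qed.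
Definition dlt (i k : nat) : R := if Nat.eqb i k then 1 else 0.
Lemma sumn_delta n j g : (j < n)%nat -> sumn n (fun l => dlt j l * g l) = g j.
Proof. induction n; intros Hj; [lia|]. rewrite sumn_S. unfold dlt at 2.
  destruct (Nat.eqb_spec j n).
  - subst. rewrite (sumn_ext _ _ (fun _ => 0)). rewrite sumn_zero; ring.
    intros i Hi. unfold dlt. destruct (Nat.eqb_spec n i); [lia|ring].
  - rewrite IHn by lia. ring. Qed.

Lemma sumn_CS n f g : (sumn n (fun i => f i * g i))^2 <= sumn n (fun i => f i ^ 2) * sumn n (fun i => g i ^ 2).
Proof. induction n; [rewrite !sumn_0; lra|]. rewrite !sumn_S.
  set (S0 := sumn n (fun i => f i * g i)) in *. set (A0 := sumn n (fun i => f i ^2)) in *.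
  set (B0 := sumn n (fun i => g i ^2)) in *. set (a := f n). set (b := g n).
  assert (HA : 0 <= A0) by (apply sumn_nonneg; intros; nra).
  assert (HB : 0 <= B0) by (apply sumn_nonneg; intros; nra).
  assert (H1 : (2*S0*a*b)^2 <= (A0*b^2 + B0*a^2)^2).
  { assert ((2*S0*a*b)^2 <= 4*(A0*B0)*(a^2*b^2)). { replace ((2*S0*a*b)^2) with (4*S0^2*(a^2*b^2)) by ring.
      apply Rmult_le_compat_r; [nra|]. nra. }
    assert (4*(A0*B0)*(a^2*b^2) <= (A0*b^2 + B0*a^2)^2) by (pose proof (pow2_ge_0 (A0*b^2 - B0*a^2)); nra). lra. }
  assert (H2 : 2*S0*a*b <= A0*b^2 + B0*a^2).
  { assert (0 <= A0*b^2 + B0*a^2) by nra. nra. }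
  nra. Qed.

Lemma sqrt_le_sum_abs n f : sqrt (sumn n (fun i => f i ^ 2)) <= sumn n (fun i => Rabs (f i)).
Proof.
  assert (H0 : 0 <= sumn n (fun i => Rabs (f i))) by (apply sumn_nonneg; intros; apply Rabs_pos).
  assert (H : sumn n (fun i => f i ^ 2) <= (sumn n (fun i => Rabs (f i)))^2).
  { clear H0. induction n; [rewrite !sumn_0; nra|]. rewrite !sumn_S.
    assert (0 <= sumn n (fun i => Rabs (f i))) by (apply sumn_nonneg; intros; apply Rabs_pos).
    pose proof (Rabs_pos (f n)). assert (f n ^2 = Rabs (f n) ^2).
    { unfold Rabs; destruct (Rcase_abs (f n)); ring. } nra. }
  rewrite <- (sqrt_pow2 _ H0). apply sqrt_le_1_alt. exact H. Qed.
Lemma RV_ext n (x y : RV n) : (forall i, coord x i = coord y i) -> x = y.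
Proof. destruct x as [x px], y as [y py]; unfold coord; simpl; intros H.
  assert (x = y) by (apply functional_extensionality; auto). subst. f_equal. apply proof_irrelevance. Qed.
Lemma coord_out n (x : RV n) i : (n <= i)%nat -> coord x i = 0.
Proof. intros H. unfold coord. apply (proj2_sig x). exact H. Qed.
Definition mkRV (n:nat) (f : nat -> R) : RV n.
Proof. exists (fun i => if Nat.ltb i n then f i else 0). intros i Hi. destruct (Nat.ltb_spec i n); [lia|reflexivity]. Defined.
Lemma coord_mkRV n f i : (i < n)%nat -> coord (mkRV n f) i = f i.
Proof. intros H. unfold coord, mkRV; simpl. destruct (Nat.ltb_spec i n); [reflexivity|lia]. Qed.
Lemma coord_vlin n a (x : RV n) b y i : coord (vlin a x b y) i = a * coord x i + b * coord y i.
Proof. reflexivity. Qed.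
Definition dd {n} (x y : RV n) := sumn n (fun i => (coord x i - coord y i)^2).
Lemma rdist_dd n (x y : RV n) : rdist x y = sqrt (dd x y). Proof. reflexivity. Qed.
Definition z0 n := mkRV n (fun _ => 0).
Definition vsub {n} (x y : RV n) := vlin 1 x (-1) y.
Lemma dd_ge0 n (x y : RV n) : 0 <= dd x y.
Proof. apply sumn_nonneg; intros; apply pow2_ge_0. Qed.
Lemma dd_sym n (x y : RV n) : dd x y = dd y x.
Proof. apply sumn_ext; intros; ring. Qed.
Lemma rdist_sym n (x y : RV n) : rdist x y = rdist y x.
Proof. rewrite !rdist_dd, dd_sym; reflexivity. Qed.
Lemma rdist_ge0 n (x y : RV n) : 0 <= rdist x y.
Proof. apply sqrt_pos. Qed.
Lemma rdist_refl n (x : RV n) : rdist x x = 0.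
Proof. rewrite rdist_dd. unfold dd. rewrite (sumn_ext _ _ (fun _ => 0)), sumn_zero. apply sqrt_0. intros; ring. Qed.
Lemma rnorm_rdist n (x : RV n) : rnorm x = rdist x (z0 n).
Proof. unfold rnorm, rdist. f_equal. apply sumn_ext. intros. unfold z0. rewrite coord_mkRV by auto. ring. Qed.
Lemma rdist_vsub n (x y : RV n) : rdist x y = rnorm (vsub x y).
Proof. unfold rnorm, rdist. f_equal. apply sumn_ext. intros. unfold vsub. rewrite coord_vlin. ring. Qed.
Lemma dd_eq0 n (x y : RV n) : dd x y = 0 -> x = y.
Proof. intros H. apply RV_ext. intros i. destruct (Nat.lt_ge_cases i n).
  - pose proof (sumn_term n (fun i => (coord x i - coord y i)^2) i ltac:(intros; apply pow2_ge_0) H0). fold (dd x y) in H1. nra.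
  - rewrite !coord_out by auto; reflexivity. Qed.
Lemma rdist_eq0 n (x y : RV n) : rdist x y = 0 -> x = y.
Proof. rewrite rdist_dd. intros H. apply dd_eq0. apply sqrt_eq_0; auto. apply dd_ge0. Qed.

Lemma rdist_tri n (x y z : RV n) : rdist x z <= rdist x y + rdist y z.
Proof. rewrite !rdist_dd.
  set (c := fun i => coord x i - coord y i). set (e := fun i => coord y i - coord z i).
  assert (E1 : dd x z = sumn n (fun i => c i ^2) + 2 * sumn n (fun i => c i * e i) + sumn n (fun i => e i ^ 2)).
  { rewrite <- sumn_scal, <- !sumn_plus. apply sumn_ext; intros. unfold c, e. ring. }
  assert (E2 : dd x y = sumn n (fun i => c i ^2)) by reflexivity.
  assert (E3 : dd y z = sumn n (fun i => e i ^2)) by reflexivity.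
  pose proof (sumn_CS n c e). pose proof (dd_ge0 n x y). pose proof (dd_ge0 n y z).
  pose proof (sqrt_pos (dd x y)). pose proof (sqrt_pos (dd y z)).
  pose proof (sqrt_sqrt _ H0). pose proof (sqrt_sqrt _ H1).
  assert (HS : sumn n (fun i => c i * e i) <= sqrt (dd x y) * sqrt (dd y z)).
  { set (s := sumn n (fun i => c i * e i)) in *. rewrite <- E2, <- E3 in H.
    assert (EP : dd x y * dd y z = (sqrt (dd x y) * sqrt (dd y z))^2) by (rewrite <- H4 at 1; rewrite <- H5 at 1; ring).
    rewrite EP in H. assert (0 <= sqrt (dd x y) * sqrt (dd y z)) by (apply Rmult_le_pos; auto).
    destruct (Rle_lt_dec s (sqrt (dd x y) * sqrt (dd y z))); auto. nra. }
  rewrite <- (sqrt_pow2 (sqrt (dd x y) + sqrt (dd y z))) by lra. apply sqrt_le_1_alt. nra. Qed.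

Lemma rnorm_ge0 n (x : RV n) : 0 <= rnorm x. Proof. apply sqrt_pos. Qed.
Lemma rnorm_tri n (x y : RV n) : rnorm x <= rnorm y + rdist x y.
Proof. rewrite !rnorm_rdist. pose proof (rdist_tri n x y (z0 n)). lra. Qed.
Lemma coord_le_rnorm n (x : RV n) i : (i < n)%nat -> Rabs (coord x i) <= rnorm x.
Proof. intros H. unfold rnorm. rewrite <- (sqrt_pow2 (Rabs (coord x i))) by apply Rabs_pos. apply sqrt_le_1_alt.
  eapply Rle_trans; [|apply (sumn_term n (fun i => coord x i ^2) i); auto; intros; apply pow2_ge_0].
  cbv beta. unfold Rabs; destruct (Rcase_abs (coord x i)); nra. Qed.
Inductive VP {n} (P : RV n -> Prop) : RV n -> RV n -> nat -> Prop :=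
| VP0 x : VP P x x 0
| VPS x z y k : P x -> Nb P x z -> VP P z y k -> VP P x y (S k).

Lemma vp_app n (P : RV n -> Prop) x y w k m : VP P x y k -> VP P y w m -> VP P x w (k + m).
Proof. induction 1; intros Hw; simpl; auto. eapply VPS; eauto. Qed.

Lemma vp_bound n ds (P : RV n -> Prop) (u : RV n -> RV ds) N :
  (forall a b, P a -> Nb P a b -> rdist (u b) (u a) <= N) ->
  forall x y k, VP P x y k -> rdist (u y) (u x) <= INR k * N.
Proof. intros HN x y k Hv. induction Hv. rewrite rdist_refl. simpl; lra.
  rewrite S_INR. pose proof (rdist_tri _ (u y) (u z) (u x)). pose proof (HN x z H H0). lra. Qed.

Definition mid {n} (x y : RV n) := vlin (1/2) x (1/2) y.
Lemma parallelogram n (x y k : RV n) : dd x k + dd y k = 2 * dd (mid x y) k + dd x y / 2.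
Proof. unfold dd. unfold Rdiv. rewrite <- !sumn_scal, <- Rmult_comm, <- sumn_scal, <- !sumn_plus. apply sumn_ext.
  intros. unfold mid; rewrite coord_vlin. field. Qed.
Lemma dd_mid n (x y : RV n) : dd (mid x y) x = dd x y / 4.
Proof. unfold dd. unfold Rdiv. rewrite Rmult_comm, <- sumn_scal. apply sumn_ext.
  intros. unfold mid; rewrite coord_vlin. field. Qed.
Lemma dd_mid' n (x y : RV n) : dd (mid x y) y = dd x y / 4.
Proof. unfold dd. unfold Rdiv. rewrite Rmult_comm, <- sumn_scal. apply sumn_ext.
  intros. unfold mid; rewrite coord_vlin. field. Qed.

Lemma gabriel n (P : RV n -> Prop) x y : P y -> x <> y ->
  (forall k, P k -> dd (mid x y) x <= dd (mid x y) k) -> Nb P x y.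
Proof. intros Hy Hne H. split; [auto|split; [auto|]]. exists (mid x y). split.
  - rewrite !rdist_dd, dd_mid, dd_mid'. reflexivity.
  - intros k Hk. rewrite !rdist_dd. apply sqrt_le_1_alt. auto. Qed.

Definition ltb (r s : R) : bool := if Rlt_dec r s then true else false.
Lemma ltb_spec r s : ltb r s = true <-> r < s.
Proof. unfold ltb; destruct (Rlt_dec r s); split; intros; auto; discriminate. Qed.
Lemma count_le (D : list R) t s : t <= s ->
  (length (filter (fun r => ltb r t) D) <= length (filter (fun r => ltb r s) D))%nat.
Proof. intros H. induction D; simpl; auto.
  destruct (ltb a t) eqn:E1, (ltb a s) eqn:E2; simpl; try lia.
  apply ltb_spec in E1. assert (a < s) by lra. apply ltb_spec in H0. congruence. Qed.
Lemma count_lt (D : list R) t s : In t D -> t < s ->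
  (length (filter (fun r => ltb r t) D) < length (filter (fun r => ltb r s) D))%nat.
Proof. intros Hin H. induction D; simpl in *; [contradiction|].
  destruct Hin as [Ha|Hin]; [subst a|].
  - destruct (ltb t t) eqn:E1. apply ltb_spec in E1; lra.
    destruct (ltb t s) eqn:E2. 2:{ assert (t < s) by lra. apply ltb_spec in H0; congruence. } simpl.
    pose proof (count_le D t s ltac:(lra)). lia.
  - specialize (IHD Hin). destruct (ltb a t) eqn:E1, (ltb a s) eqn:E2; simpl; try lia.
    apply ltb_spec in E1. assert (a < s) by lra. apply ltb_spec in H0. congruence. Qed.

Lemma vp_exists n (P : RV n -> Prop)
  (disc : forall D, exists Del : list R, forall p q, P p -> P q -> dd p q <= D -> In (dd p q) Del) :
  forall x y, P x -> P y -> exists k, VP P x y k.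
Proof.
  intros x0 y0 Hx0 Hy0. destruct (disc (dd x0 y0)) as [Del HDel].
  set (cnt := fun s => length (filter (fun r => ltb r s) Del)).
  assert (main : forall m x y, P x -> P y -> dd x y <= dd x0 y0 -> cnt (dd x y) = m -> exists k, VP P x y k).
  2:{ eapply main; eauto. lra. }
  intros m. induction m as [m IH] using (well_founded_induction lt_wf).
  intros x y Hx Hy HD Hc.
  destruct (classic (x = y)) as [<-|Hne]. { exists 0%nat. constructor. }
  destruct (classic (forall k, P k -> dd (mid x y) x <= dd (mid x y) k)) as [Hall|Hex].
  - exists 1%nat. apply (VPS P x y y 0); [auto| apply gabriel; auto | constructor].
  - apply not_all_ex_not in Hex. destruct Hex as [k Hk].
    apply imply_to_and in Hk. destruct Hk as [Pk Hk]. apply Rnot_le_lt in Hk.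
    pose proof (parallelogram n x y k). rewrite dd_mid in Hk.
    pose proof (dd_ge0 n x k). pose proof (dd_ge0 n y k).
    assert (G1 : dd x k < dd x y) by lra. assert (G2 : dd k y < dd x y) by (rewrite dd_sym; lra).
    destruct (IH (cnt (dd x k))) with (x := x) (y := k) as [k1 Hk1]; auto.
    { rewrite <- Hc. apply count_lt; auto. apply HDel; auto; lra. } lra.
    destruct (IH (cnt (dd k y))) with (x := k) (y := y) as [k2 Hk2]; auto.
    { rewrite <- Hc. apply count_lt; auto. apply HDel; auto; lra. } lra.
    exists (k1 + k2)%nat. eapply vp_app; eauto. Qed.
Lemma ker_fun d (A : nat -> nat -> R) : nonsingular d A ->
  forall f : nat -> R, (forall i, (i < d)%nat -> sumn d (fun j => A i j * f j) = 0) ->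
  forall j, (j < d)%nat -> f j = 0.
Proof. intros HA f Hf j Hj. rewrite <- (coord_mkRV d f j Hj). apply HA. intros i Hi.
  rewrite <- (Hf i Hi). apply sumn_ext. intros; rewrite coord_mkRV; auto. Qed.

Ltac unsetR := repeat match goal with | x := _ : R |- _ => subst x end.
Ltac solve3 := intros i Hi; destruct i as [|[|[|i]]]; try lia; unfold sumn; simpl; unsetR; lra.

Lemma inv_ex d A : (d = 2%nat \/ d = 3%nat) -> nonsingular d A -> exists B : nat -> nat -> R,
  (forall i k, (i<d)%nat -> (k<d)%nat -> sumn d (fun j => B i j * A j k) = dlt i k) /\
  (forall i k, (i<d)%nat -> (k<d)%nat -> sumn d (fun j => A i j * B j k) = dlt i k).
Proof. intros [-> | ->] HA; pose proof (ker_fun _ A HA) as K.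
  - set (a := A 0%nat 0%nat) in *. set (b := A 0%nat 1%nat). set (c := A 1%nat 0%nat). set (e := A 1%nat 1%nat).
    set (det := a * e - b * c).
    assert (Hdet : det <> 0).
    { intros H0. unfold det in H0.
      pose proof (K (fun j => match j with 0 => e | _ => -c end) ltac:(solve3)) as K1.
      pose proof (K (fun j => match j with 0 => -b | _ => a end) ltac:(solve3)) as K2.
      pose proof (K1 0%nat ltac:(lia)) as E1. pose proof (K1 1%nat ltac:(lia)) as E2.
      pose proof (K2 0%nat ltac:(lia)) as E3. pose proof (K2 1%nat ltac:(lia)) as E4. simpl in *.
      pose proof (K (fun j => match j with 0 => 1 | _ => 0 end) ltac:(solve3) 0%nat ltac:(lia)) as E5.
      simpl in E5. unsetR. lra. }
    exists (fun i j => (match i, j with 0,0 => e | 0,1 => -b | 1,0 => -c | _,_ => a end) / det).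
    split; intros i k Hi Hk; destruct i as [|[|i]]; try lia; destruct k as [|[|k]]; try lia;
      unfold sumn, dlt; simpl; unsetR; field; auto.
  - set (a00 := A 0%nat 0%nat) in *. set (a01 := A 0%nat 1%nat) in *. set (a02 := A 0%nat 2%nat) in *.
    set (a10 := A 1%nat 0%nat) in *. set (a11 := A 1%nat 1%nat) in *. set (a12 := A 1%nat 2%nat) in *.
    set (a20 := A 2%nat 0%nat) in *. set (a21 := A 2%nat 1%nat) in *. set (a22 := A 2%nat 2%nat) in *.
    set (adj := fun i j => match i, j with
      | 0,0 => a11*a22 - a12*a21 | 0,1 => a02*a21 - a01*a22 | 0,2 => a01*a12 - a02*a11
      | 1,0 => a12*a20 - a10*a22 | 1,1 => a00*a22 - a02*a20 | 1,2 => a02*a10 - a00*a12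
      | 2,0 => a10*a21 - a11*a20 | 2,1 => a01*a20 - a00*a21 | _,_ => a00*a11 - a01*a10 end).
    set (det := a00 * adj 0%nat 0%nat + a01 * adj 1%nat 0%nat + a02 * adj 2%nat 0%nat).
    assert (Hdet : det <> 0).
    { intros H0. unfold det, adj in H0.
      pose proof (K (fun j => adj j 0%nat) ltac:(unfold adj; solve3)) as K0.
      pose proof (K (fun j => adj j 1%nat) ltac:(unfold adj; solve3)) as K1.
      pose proof (K (fun j => adj j 2%nat) ltac:(unfold adj; solve3)) as K2.
      pose proof (K0 0%nat ltac:(lia)). pose proof (K0 1%nat ltac:(lia)). pose proof (K0 2%nat ltac:(lia)).
      pose proof (K1 0%nat ltac:(lia)). pose proof (K1 1%nat ltac:(lia)). pose proof (K1 2%nat ltac:(lia)).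
      pose proof (K2 0%nat ltac:(lia)). pose proof (K2 1%nat ltac:(lia)). pose proof (K2 2%nat ltac:(lia)).
      unfold adj in *; simpl in *. clear K0 K1 K2.
      (* r_k x e0 = (0, rk2, -rk1), r_k x e1 = (-rk2, 0, rk0) *)
      pose proof (K (fun j => match j with 0 => 0 | 1 => a02 | _ => -a01 end) ltac:(solve3)) as L0.
      pose proof (K (fun j => match j with 0 => -a02 | 1 => 0 | _ => a00 end) ltac:(solve3)) as L1.
      pose proof (K (fun j => match j with 0 => 0 | 1 => a12 | _ => -a11 end) ltac:(solve3)) as L2.
      pose proof (K (fun j => match j with 0 => -a12 | 1 => 0 | _ => a10 end) ltac:(solve3)) as L3.
      pose proof (K (fun j => match j with 0 => 0 | 1 => a22 | _ => -a21 end) ltac:(solve3)) as L4.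
      pose proof (K (fun j => match j with 0 => -a22 | 1 => 0 | _ => a20 end) ltac:(solve3)) as L5.
      pose proof (L0 1%nat ltac:(lia)). pose proof (L0 2%nat ltac:(lia)). pose proof (L1 2%nat ltac:(lia)).
      pose proof (L2 1%nat ltac:(lia)). pose proof (L2 2%nat ltac:(lia)). pose proof (L3 2%nat ltac:(lia)).
      pose proof (L4 1%nat ltac:(lia)). pose proof (L4 2%nat ltac:(lia)). pose proof (L5 2%nat ltac:(lia)).
      simpl in *. clear L0 L1 L2 L3 L4 L5.
      pose proof (K (fun j => match j with 0 => 1 | _ => 0 end) ltac:(solve3) 0%nat ltac:(lia)) as E5.
      simpl in E5. unsetR. lra. }
    exists (fun i j => adj i j / det).
    split; intros i k Hi Hk; destruct i as [|[|[|i]]]; try lia; destruct k as [|[|[|k]]]; try lia;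
      unfold sumn, dlt; simpl; unsetR; simpl; field; auto.
Qed.
Lemma sumn_minus n f g : sumn n f - sumn n g = sumn n (fun i => f i - g i).
Proof. unfold Rminus. rewrite <- (Rmult_1_l (sumn n g)), Ropp_mult_distr_l, <- sumn_scal, <- sumn_plus.
  apply sumn_ext; intros; ring. Qed.
Definition vecA (d : nat) (A : nat -> nat -> R) (z : nat -> Z) : RV d :=
  mkRV d (fun i => sumn d (fun j => A i j * IZR (z j))).
Lemma Lh_vecA d A z : Lh d A (vecA d A z).
Proof. exists z. intros i Hi. unfold vecA. rewrite coord_mkRV; auto. Qed.

Lemma matvec d (X Y : nat -> nat -> R) : (forall i k, (i<d)%nat -> (k<d)%nat -> sumn d (fun j => X i j * Y j k) = dlt i k) ->
  forall i v, (i < d)%nat -> sumn d (fun j => X i j * sumn d (fun k => Y j k * v k)) = v i.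
Proof. intros H i v Hi.
  rewrite (sumn_ext _ _ (fun j => sumn d (fun k => X i j * (Y j k * v k)))) by (intros; rewrite sumn_scal; reflexivity).
  rewrite sumn_swap.
  rewrite (sumn_ext _ _ (fun k => dlt i k * v k)). apply sumn_delta; auto.
  intros k Hk. rewrite <- (H i k Hi Hk). rewrite Rmult_comm, <- sumn_scal. apply sumn_ext; intros; ring. Qed.

Lemma Lh_coef d A B (HBA : forall i k, (i<d)%nat -> (k<d)%nat -> sumn d (fun j => B i j * A j k) = dlt i k)
  (x : RV d) z : (forall i, (i<d)%nat -> coord x i = sumn d (fun j => A i j * IZR (z j))) ->
  forall j, (j < d)%nat -> IZR (z j) = sumn d (fun k => B j k * coord x k).
Proof. intros Hx j Hj. rewrite (sumn_ext _ _ (fun k => B j k * sumn d (fun l => A k l * IZR (z l)))).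
  symmetry. apply (matvec d B A HBA j (fun l => IZR (z l)) Hj). intros; rewrite Hx; auto. Qed.

Definition KB d (B : nat -> nat -> R) := sumn d (fun j => sumn d (fun k => Rabs (B j k))).
Lemma KB_ge0 d B : 0 <= KB d B.
Proof. apply sumn_nonneg; intros; apply sumn_nonneg; intros; apply Rabs_pos. Qed.

Lemma sum_abs_bound d (C : nat -> R) (x : RV d) : Rabs (sumn d (fun k => C k * coord x k)) <= sumn d (fun k => Rabs (C k)) * rnorm x.
Proof. eapply Rle_trans; [apply sumn_abs|]. rewrite Rmult_comm, <- sumn_scal. apply sumn_le. intros k Hk.
  rewrite Rabs_mult. rewrite Rmult_comm. apply Rmult_le_compat_r; [apply Rabs_pos|]. apply coord_le_rnorm; auto. Qed.

Lemma zbound d A B (HBA : forall i k, (i<d)%nat -> (k<d)%nat -> sumn d (fun j => B i j * A j k) = dlt i k)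
  (x : RV d) z : (forall i, (i<d)%nat -> coord x i = sumn d (fun j => A i j * IZR (z j))) ->
  forall j, (j < d)%nat -> Rabs (IZR (z j)) <= KB d B * rnorm x.
Proof. intros Hx j Hj. rewrite (Lh_coef d A B HBA x z Hx j Hj). eapply Rle_trans; [apply sum_abs_bound|].
  apply Rmult_le_compat_r; [apply rnorm_ge0|]. unfold KB.
  apply (sumn_term d (fun j => sumn d (fun k => Rabs (B j k)))); auto. intros; apply sumn_nonneg; intros; apply Rabs_pos. Qed.

Definition rangeZ (M : Z) : list Z := map (fun k => (Z.of_nat k - M)%Z) (seq 0 (S (Z.to_nat (2*M)))).
Lemma rangeZ_in M c : (0 <= M)%Z -> (-M <= c <= M)%Z -> In c (rangeZ M).
Proof. intros HM Hc. unfold rangeZ. apply in_map_iff. exists (Z.to_nat (c + M)). split.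
  - rewrite Z2Nat.id by lia. lia.
  - apply in_seq. lia. Qed.
Fixpoint boxes (M : Z) (m : nat) : list (nat -> Z) :=
  match m with
  | O => [fun _ => 0%Z]
  | S m' => flat_map (fun z => map (fun c => fun j => if Nat.eqb j m' then c else z j) (rangeZ M)) (boxes M m')
  end.
Lemma boxes_in M m z : (0 <= M)%Z -> (forall j, (j < m)%nat -> (-M <= z j <= M)%Z) ->
  exists z', In z' (boxes M m) /\ forall j, (j < m)%nat -> z' j = z j.
Proof. intros HM. induction m; intros Hz.
  - exists (fun _ => 0%Z). split; [left; reflexivity| intros; lia].
  - destruct IHm as [z1 [Hin Hz1]]. { intros; apply Hz; lia. }
    exists (fun j => if Nat.eqb j m then z m else z1 j). split.
    + apply in_flat_map. exists z1. split; auto. apply in_map_iff. exists (z m). split; [reflexivity|].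
      apply rangeZ_in; [exact HM| apply Hz; lia].
    + intros j Hj. destruct (Nat.eqb_spec j m). subst; auto. apply Hz1; lia. Qed.

Lemma Lh_finite d A B (HBA : forall i k, (i<d)%nat -> (k<d)%nat -> sumn d (fun j => B i j * A j k) = dlt i k) :
  forall rho, exists l, forall x, Lh d A x -> rnorm x <= rho -> In x l.
Proof. intros rho. set (M := up (KB d B * Rabs rho)).
  assert (HM : (0 <= M)%Z). { pose proof (archimed (KB d B * Rabs rho)) as [H1 H2].
    assert (0 <= KB d B * Rabs rho) by (apply Rmult_le_pos; [apply KB_ge0|apply Rabs_pos]).
    apply le_IZR. fold M in H1. lra. }
  exists (map (vecA d A) (boxes M d)). intros x [z Hz] Hr.
  destruct (boxes_in M d z HM) as [z' [Hin Hz']].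
  { intros j Hj. pose proof (zbound d A B HBA x z Hz j Hj).
    pose proof (archimed (KB d B * Rabs rho)) as [H1 H2]. fold M in H1.
    assert (KB d B * rnorm x <= KB d B * Rabs rho).
    { apply Rmult_le_compat_l; [apply KB_ge0|]. pose proof (Rle_abs rho). lra. }
    assert (Rabs (IZR (z j)) < IZR M) by lra. rewrite <- abs_IZR in H3. apply lt_IZR in H3. lia. }
  apply in_map_iff. exists z'. split; auto. apply RV_ext. intros i. destruct (Nat.lt_ge_cases i d).
  - unfold vecA. rewrite coord_mkRV, Hz by auto. apply sumn_ext. intros; rewrite Hz'; auto.
  - rewrite !coord_out; auto. Qed.

Definition rho0 d (A : nat -> nat -> R) := sumn d (fun i => sumn d (fun j => Rabs (A i j))).

Lemma cover d A B (HAB : forall i k, (i<d)%nat -> (k<d)%nat -> sumn d (fun j => A i j * B j k) = dlt i k) :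
  forall a : RV d, exists x, Lh d A x /\ rdist a x <= rho0 d A.
Proof. intros a. set (y := fun j => sumn d (fun k => B j k * coord a k)).
  set (z := fun j => (up (y j) - 1)%Z).
  assert (Hyz : forall j, Rabs (y j - IZR (z j)) <= 1).
  { intros j. unfold z. rewrite minus_IZR. pose proof (archimed (y j)) as [H1 H2]. simpl.
    unfold Rabs; destruct Rcase_abs; lra. }
  exists (vecA d A z). split; [apply Lh_vecA|]. rewrite rdist_dd. unfold dd.
  eapply Rle_trans; [apply (sqrt_le_sum_abs d (fun i => coord a i - coord (vecA d A z) i))|].
  apply sumn_le. intros i Hi. unfold vecA. rewrite coord_mkRV by auto.
  rewrite <- (matvec d A B HAB i (fun k => coord a k) Hi). fold y.
  rewrite sumn_minus.
  eapply Rle_trans; [apply sumn_abs|]. apply sumn_le. intros j Hj.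
  replace (A i j * y j - A i j * IZR (z j)) with (A i j * (y j - IZR (z j))) by ring.
  change (sumn d (fun k => B j k * coord a k)) with (y j).
  replace (A i j * y j - A i j * IZR (z j)) with (A i j * (y j - IZR (z j))) by ring.
  rewrite Rabs_mult. pose proof (Hyz j). pose proof (Rabs_pos (A i j)). nra.
Qed.
Lemma Lh_sub d A (p q : RV d) : Lh d A p -> Lh d A q -> Lh d A (vsub p q).
Proof. intros [z Hz] [z' Hz']. exists (fun j => (z j - z' j)%Z). intros i Hi.
  unfold vsub; rewrite coord_vlin, Hz, Hz' by auto.
  replace (1 * sumn d (fun j => A i j * IZR (z j)) + -1 * sumn d (fun j => A i j * IZR (z' j)))
    with (sumn d (fun j => A i j * IZR (z j)) - sumn d (fun j => A i j * IZR (z' j))) by ring.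
  rewrite sumn_minus. apply sumn_ext; intros; rewrite minus_IZR; ring. Qed.

Lemma Lh_delta d A B (HBA : forall i k, (i<d)%nat -> (k<d)%nat -> sumn d (fun j => B i j * A j k) = dlt i k) :
  exists delta, 0 < delta /\ forall l m : RV d, Lh d A l -> Lh d A m -> m <> l -> delta <= rdist m l.
Proof. exists (1 / (KB d B + 1)). pose proof (KB_ge0 d B). split.
  { apply Rdiv_lt_0_compat; lra. }
  intros l m Hl Hm Hne. rewrite rdist_vsub. destruct (Lh_sub d A m l Hm Hl) as [z Hz].
  destruct (classic (exists j, (j < d)%nat /\ z j <> 0%Z)) as [[j [Hj Hzj]]|Hall].
  - pose proof (zbound d A B HBA _ z Hz j Hj).
    assert (1 <= Rabs (IZR (z j))). { rewrite <- abs_IZR. apply IZR_le. lia. }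
    pose proof (rnorm_ge0 d (vsub m l)).
    apply (Rmult_le_reg_r (KB d B + 1)); [lra|]. unfold Rdiv. rewrite Rmult_assoc, Rinv_l by lra. nra.
  - exfalso. apply Hne. apply RV_ext. intros i. destruct (Nat.lt_ge_cases i d).
    + pose proof (Hz i H0). unfold vsub in H1; rewrite coord_vlin in H1.
      rewrite (sumn_ext _ _ (fun _ => 0)) in H1. rewrite sumn_zero in H1. lra.
      intros j Hj. destruct (Z.eq_dec (z j) 0). rewrite e; simpl; ring. exfalso; apply Hall; eauto.
    + rewrite !coord_out; auto. Qed.
Definition lsum {X} (f : X -> R) (l : list X) := fold_right Rplus 0 (map f l).
Definition filt {X} (P : X -> Prop) (l : list X) :=
  filter (fun x => if excluded_middle_informative (P x) then true else false) l.
Lemma filt_In {X} (P : X -> Prop) l x : In x (filt P l) <-> In x l /\ P x.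
Proof. unfold filt. rewrite filter_In. destruct (excluded_middle_informative (P x)); intuition discriminate. Qed.
Lemma filt_NoDup {X} (P : X -> Prop) l : NoDup l -> NoDup (filt P l).
Proof. apply NoDup_filter. Qed.
Lemma lsum_split {X} (f : X -> R) P l : lsum f l = lsum f (filt P l) + lsum f (filt (fun x => ~ P x) l).
Proof. induction l; [simpl; unfold lsum; simpl; ring|]. unfold lsum, filt in *; simpl.
  destruct (excluded_middle_informative (P a)); destruct (excluded_middle_informative (~ P a)); try tauto;
  simpl; rewrite IHl; ring. Qed.
Lemma lsum_le {X} (f g : X -> R) l : (forall x, In x l -> f x <= g x) -> lsum f l <= lsum g l.
Proof. induction l; intros H; unfold lsum; simpl; [lra|]. fold (lsum f l) (lsum g l).
  pose proof (H a (or_introl eq_refl)). pose proof (IHl (fun x Hx => H x (or_intror Hx))). lra. Qed.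
Lemma lsum_map {X Y} (g : Y -> R) (h : X -> Y) l : lsum g (map h l) = lsum (fun x => g (h x)) l.
Proof. unfold lsum. rewrite map_map. reflexivity. Qed.
Lemma lsum_zero {X} (f : X -> R) l : (forall x, In x l -> f x = 0) -> lsum f l = 0.
Proof. induction l; intros H; unfold lsum; simpl; [lra|]. fold (lsum f l).
  rewrite H, IHl. ring. intros; apply H; right; auto. left; auto. Qed.
Lemma lsum_nonneg {X} (f : X -> R) l : (forall x, In x l -> 0 <= f x) -> 0 <= lsum f l.
Proof. intros H. replace 0 with (lsum (fun _ => 0) l). apply lsum_le; auto.
  apply lsum_zero; auto. Qed.

Lemma inj_bound {X Y} (S : Y -> Prop) (f : X -> R) (g : Y -> R) (h : X -> Y) M l :
  NoDup l -> (forall x, In x l -> S (h x)) -> (forall x y, In x l -> In y l -> h x = h y -> x = y) ->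
  (forall x, In x l -> f x <= g (h x)) -> SumLe S g M -> lsum f l <= M.
Proof. intros Hnd HS Hinj Hf HM. eapply Rle_trans; [apply (lsum_le f (fun x => g (h x))); auto|].
  rewrite <- lsum_map. apply HM.
  - apply NoDup_map_NoDup_ForallPairs; [|auto]. intros x y Hx Hy. apply Hinj; auto.
  - apply Forall_forall. intros y Hy. apply in_map_iff in Hy. destruct Hy as [x [<- Hx]]. auto. Qed.

Lemma group_bound {X K} (key : X -> K) (Pr : X -> Prop) (f : X -> R) M :
  0 <= M -> (forall q ls, NoDup ls -> (forall x, In x ls -> Pr x) -> (forall x, In x ls -> key x = q) -> lsum f ls <= M) ->
  forall Q ls, NoDup ls -> (forall x, In x ls -> Pr x) -> (forall x, In x ls -> In (key x) Q) ->
  lsum f ls <= INR (length Q) * M.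
Proof. intros HM Hg Q. induction Q as [|q Q IH]; intros ls Hnd HP HQ.
  - destruct ls as [|x ls]. unfold lsum; simpl; lra. exfalso. apply (HQ x). left; auto.
  - rewrite (lsum_split f (fun x => key x = q)). simpl length. rewrite S_INR.
    assert (lsum f (filt (fun x => key x = q) ls) <= M).
    { apply (Hg q). apply filt_NoDup; auto. intros x Hx; apply filt_In in Hx; apply HP; tauto.
      intros x Hx; apply filt_In in Hx; tauto. }
    assert (lsum f (filt (fun x => key x <> q) ls) <= INR (length Q) * M).
    { apply IH. apply filt_NoDup; auto. intros x Hx; apply filt_In in Hx; apply HP; tauto.
      intros x Hx; apply filt_In in Hx. destruct Hx as [Hx Hk]. destruct (HQ x Hx); [congruence|auto]. }
    lra. Qed.

Lemma nodup_single {X} (l : list X) q : NoDup l -> (forall x, In x l -> x = q) -> l = [] \/ l = [q].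
Proof. intros Hnd H. destruct l as [|a l]; [auto|right]. assert (a = q) by (apply H; left; auto). rewrite H0 in *.
  destruct l as [|b l]; auto. exfalso. inversion Hnd. apply H3. assert (b = q) by (apply H; right; left; auto).
  rewrite H5; left; auto. Qed.

Lemma max_ex {X} (P : X -> nat -> Prop) (l : list X) : (forall x, In x l -> exists n, P x n) ->
  exists K, forall x, In x l -> exists n, (n <= K)%nat /\ P x n.
Proof. induction l; intros H. exists 0%nat; intros x [].
  destruct IHl as [K HK]. intros; apply H; right; auto. destruct (H a (or_introl eq_refl)) as [n Hn].
  exists (Nat.max n K). intros x [<-|Hx]. exists n; split; auto; lia.
  destruct (HK x Hx) as [m [Hm1 Hm2]]. exists m; split; auto; lia. Qed.
Lemma dd_vsub n (p q : RV n) : dd p q = dd (vsub p q) (z0 n).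
Proof. unfold dd. apply sumn_ext. intros. unfold vsub, z0. rewrite coord_vlin, coord_mkRV by auto. ring. Qed.

Lemma L_disc d A B (HBA : forall i k, (i<d)%nat -> (k<d)%nat -> sumn d (fun j => B i j * A j k) = dlt i k)
  (L : RV d -> Prop) Rdef F (Lcases : forall p, L p -> (rnorm p < Rdef /\ In p F) \/ Lh d A p) :
  forall D, exists Del : list R, forall p q, L p -> L q -> dd p q <= D -> In (dd p q) Del.
Proof. intros D. destruct (Lh_finite d A B HBA (sqrt D)) as [l0 H0].
  destruct (Lh_finite d A B HBA (Rdef + sqrt D)) as [l1 H1].
  set (P := F ++ l1).
  exists (map (fun pq => dd (fst pq) (snd pq)) (list_prod P P) ++ map (fun v => dd v (z0 d)) l0).
  intros p q Hp Hq HD. assert (Hr : rdist p q <= sqrt D) by (rewrite rdist_dd; apply sqrt_le_1_alt; auto).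
  assert (Hboth : In p P -> In q P -> In (dd p q) (map (fun pq => dd (fst pq) (snd pq)) (list_prod P P) ++ map (fun v => dd v (z0 d)) l0)).
  { intros. apply in_or_app; left. apply in_map_iff. exists (p, q). split; auto. apply in_prod; auto. }
  assert (HF : forall x, In x F -> In x P) by (intros; unfold P; apply in_or_app; auto).
  assert (Hl1 : forall x, Lh d A x -> rnorm x <= Rdef + sqrt D -> In x P) by (intros; unfold P; apply in_or_app; auto).
  destruct (Lcases p Hp) as [[Hp1 Hp2]|Hp1]; destruct (Lcases q Hq) as [[Hq1 Hq2]|Hq1].
  - apply Hboth; apply HF; auto.
  - apply Hboth; [apply HF; auto|]. apply Hl1; auto. pose proof (rnorm_tri d q p). rewrite rdist_sym in H. lra.
  - apply Hboth; [|apply HF; auto]. apply Hl1; auto. pose proof (rnorm_tri d p q). lra.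
  - apply in_or_app; right. rewrite (dd_vsub d p q). apply (in_map (fun v => dd v (z0 d))). apply H0. apply Lh_sub; auto.
    rewrite <- rdist_vsub; auto. Qed.
Lemma c0_lemma delta c t s : 0 < delta -> delta <= t -> 0 <= c -> 0 <= s -> s <= t + c ->
  delta / (delta + c) * s <= t.
Proof. intros. apply (Rmult_le_reg_r (delta + c)); [lra|].
  replace (delta / (delta + c) * s * (delta + c)) with (delta * s) by (field; lra). nra. Qed.

Lemma rdist_le_norms n (x y : RV n) : rdist x y <= rnorm x + rnorm y.
Proof. rewrite !rnorm_rdist. pose proof (rdist_tri n x (z0 n) y). rewrite (rdist_sym n (z0 n) y) in H. lra. Qed.

Lemma sq_le_le a N : 0 <= a -> 0 <= N -> a ^ 2 <= N ^ 2 -> a <= N.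
Proof. intros. destruct (Rle_lt_dec a N); auto. assert (N*N < a*a) by (apply Rmult_le_0_lt_compat; lra). simpl in H1. lra. Qed.

Theorem mainTheorem18 (d ds : nat) (Hd : d = 2%nat \/ d = 3%nat) (Hds : ds = 2%nat \/ ds = 3%nat)
  (A : nat -> nat -> R) (HA : nonsingular d A)
  (L : RV d -> Prop) (Rdef : R) (HRC : RC d A L Rdef) :
  exists (I : (RV d -> RV ds) -> (RV d -> RV ds)) (C : R), 0 < C /\
    (forall u v, (forall l, L l -> u l = v l) -> forall l, Lh d A l -> I u l = I v l) /\
    (forall u v a b, inU L u -> inU L v -> forall l, Lh d A l ->
        I (fun x => vlin a (u x) b (v x)) l = vlin a (I u l) b (I v l)) /\
    (forall u, inU L u -> inU (Lh d A) (I u)) /\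
    (forall u N, inU L u -> 0 <= N -> energy_le L u N -> energy_le (Lh d A) (I u) (C * N)) /\
    (forall u, inU L u -> forall l, Lh d A l -> Rdef < rnorm l -> I u l = u l) /\
    (exists c0, 0 < c0 <= 1 /\
      forall r, 0 < r -> exists R, r <= R /\
        forall w, L1 d w -> forall u, inU L u -> forall M,
          wsum_le L R (fun t => w (c0 * t)) u M ->
          wsum_le (Lh d A) r w (I u) (C * M)).
Proof.
  destruct HRC as [HR0 [Hiff [F HF]]].
  destruct (inv_ex d A Hd HA) as [B [HBA HAB]].
  set (rho := rho0 d A).
  assert (Hrho : 0 <= rho) by (apply sumn_nonneg; intros; apply sumn_nonneg; intros; apply Rabs_pos).
  assert (Lcases : forall p, L p -> (rnorm p < Rdef /\ In p F) \/ Lh d A p).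
  { intros p Hp. destruct (Rlt_le_dec (rnorm p) Rdef). left; auto. right; apply Hiff; auto. }
  assert (LhL : forall p, Lh d A p -> Rdef <= rnorm p -> L p). { intros p Hp Hr; apply Hiff; auto. }
  assert (Hq0 : exists q0, Lh d A q0 /\ Rdef < rnorm q0).
  { set (a := mkRV d (fun i => if Nat.eqb i 0 then Rdef + rho + 1 else 0)).
    destruct (cover d A B HAB a) as [x [Hx Hax]]. exists x. split; auto.
    assert (Ha : Rdef + rho + 1 <= rnorm a).
    { pose proof (coord_le_rnorm d a 0 ltac:(destruct Hd; lia)). unfold a in H. rewrite coord_mkRV in H by (destruct Hd; lia).
      simpl in H. rewrite Rabs_right in H by lra. exact H. }
    pose proof (rnorm_tri d a x). fold rho in Hax. lra. }
  destruct Hq0 as [q0 [Hq0 Hq0r]].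
  assert (Lq0 : L q0) by (apply LhL; auto; lra).
  set (pi := fun x : RV d => if excluded_middle_informative (Rdef < rnorm x) then x else q0).
  assert (pi_ext : forall x, Rdef < rnorm x -> pi x = x).
  { intros x Hx. unfold pi. destruct (excluded_middle_informative (Rdef < rnorm x)); tauto. }
  assert (pi_int : forall x, ~ Rdef < rnorm x -> pi x = q0).
  { intros x Hx. unfold pi. destruct (excluded_middle_informative (Rdef < rnorm x)); tauto. }
  assert (pi_L : forall x, Lh d A x -> L (pi x)).
  { intros x Hx. destruct (classic (Rdef < rnorm x)). rewrite pi_ext; auto. apply LhL; auto; lra. rewrite pi_int; auto. }
  assert (Hpath : forall x y, L x -> L y -> exists k, VP L x y k).
  { apply vp_exists. apply (L_disc d A B HBA L Rdef F Lcases). }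
  destruct (Lh_finite d A B HBA (Rdef + 2 * rho)) as [lQ HlQ].
  set (Q := filt (Lh d A) lQ).
  set (Sp := list_prod Q Q).
  destruct (max_ex (fun p n => VP L (pi (fst p)) (pi (snd p)) n) Sp) as [K HK].
  { intros [l m] Hin. apply in_prod_iff in Hin. destruct Hin as [Hl Hm].
    apply filt_In in Hl; apply filt_In in Hm. apply Hpath; apply pi_L; tauto. }
  set (CE := 1 + INR (length Sp) * (INR K * INR K)).
  destruct (Lh_finite d A B HBA Rdef) as [Int HInt].
  destruct (Lh_delta d A B HBA) as [delta [Hdelta Hdl]].
  set (c0 := delta / (delta + (Rdef + rnorm q0))).
  set (CW := 1 + 2 * INR (length Int)).
  assert (HCE : 1 <= CE) by (unfold CE; pose proof (pos_INR (length Sp)); pose proof (pos_INR K); nra).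
  assert (HCW : 1 <= CW) by (unfold CW; pose proof (pos_INR (length Int)); lra).
  set (I := fun (u : RV d -> RV ds) x => u (pi x)).
  exists I, (CE + CW).
  assert (Edge : forall (u : RV d -> RV ds) N, 0 <= N -> energy_le L u N -> forall a b, L a -> Nb L a b -> rdist (u b) (u a) <= N).
  { intros u N HN HE a b Ha Hab. apply sq_le_le; auto. apply rdist_ge0.
    pose proof (HE [(a,b)] ltac:(constructor; [intros []|constructor]) ltac:(constructor; [split; auto|constructor])).
    simpl in H. lra. }
  assert (Henergy : forall (u : RV d -> RV ds) N, 0 <= N -> energy_le L u N -> energy_le (Lh d A) (I u) ((CE + CW) * N)).
  { intros u N HN HE ls Hnd Hall. rewrite Forall_forall in Hall.
    change (lsum (fun p => rdist (u (pi (snd p))) (u (pi (fst p))) ^ 2) ls <= ((CE + CW) * N) ^ 2).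
    set (f := fun p : RV d * RV d => rdist (u (pi (snd p))) (u (pi (fst p))) ^ 2).
    set (G := fun p : RV d * RV d => Rdef < rnorm (fst p) /\ Rdef < rnorm (snd p) /\ Nb L (fst p) (snd p)).
    rewrite (lsum_split f G).
    assert (P1 : lsum f (filt G ls) <= N ^ 2).
    { apply (inj_bound (fun p => L (fst p) /\ Nb L (fst p) (snd p)) f (fun p => rdist (u (snd p)) (u (fst p)) ^ 2) (fun p => p)).
      - apply filt_NoDup; auto.
      - intros x Hx. apply filt_In in Hx. destruct Hx as [Hx [H1 [H2 H3]]]. split; auto.
        apply LhL; [apply (Hall x Hx)|lra].
      - auto.
      - intros x Hx. apply filt_In in Hx. destruct Hx as [Hx [H1 [H2 H3]]]. unfold f. rewrite !pi_ext; auto. lra.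
      - exact HE. }
    assert (BadSp : forall x, In x (filt (fun x => ~ G x) ls) -> In x Sp).
    { intros x Hx. apply filt_In in Hx. destruct Hx as [Hx Hbad].
        destruct x as [l m]; simpl in *. destruct (Hall _ Hx) as [Hl [Hm [Hne [a [Heq Hmin]]]]].
        simpl in Hl, Hm, Hne, Heq, Hmin.
        destruct (cover d A B HAB a) as [k [Hk Hak]]. fold rho in Hak.
        assert (Hal : rdist a l <= rho) by (specialize (Hmin k Hk); lra).
        assert (Ham : rdist a m <= rho) by lra.
        pose proof (rdist_tri d l a m). pose proof (rdist_tri d m a l). rewrite (rdist_sym d l a) in *.
        rewrite (rdist_sym d m a) in *.
        pose proof (rnorm_tri d l m). pose proof (rnorm_tri d m l).
        assert (Hb : rnorm l <= Rdef + 2 * rho /\ rnorm m <= Rdef + 2 * rho).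
        { destruct (classic (Rdef < rnorm l)) as [El|El]; destruct (classic (Rdef < rnorm m)) as [Em|Em].
          - destruct (classic (exists k', L k' /\ rdist a k' < rdist a l)) as [[k' [Hk' Hlt]]|Hno].
            + destruct (Lcases k' Hk') as [[Hk1 Hk2]|Hk1].
              * pose proof (rnorm_tri d l k'). pose proof (rnorm_tri d m k').
                pose proof (rdist_tri d l a k'). pose proof (rdist_tri d m a k').
                rewrite (rdist_sym d l a), (rdist_sym d m a) in *. lra.
              * specialize (Hmin k' Hk1). lra.
            + exfalso. apply Hbad. unfold G; simpl. split; [auto|split; [auto|]].
              split; [apply LhL; auto; lra|]. split; auto. exists a. split; auto.
              intros k' Hk'. apply Rnot_lt_le. intros Hlt. apply Hno. eauto.
          - apply Rnot_lt_le in Em. lra.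
          - apply Rnot_lt_le in El. lra.
          - apply Rnot_lt_le in El. apply Rnot_lt_le in Em. lra. }
        unfold Sp. apply in_prod; apply filt_In; split; auto; apply HlQ; tauto. }
    assert (P2 : lsum f (filt (fun x => ~ G x) ls) <= INR (length Sp) * (INR K * N) ^ 2).
    { apply (group_bound (fun p => p) (fun p => In p Sp) f).
      - apply pow2_ge_0.
      - intros q ls' Hnd' HP Hk. destruct (nodup_single ls' q Hnd' Hk) as [-> | ->].
        unfold lsum; simpl; apply pow2_ge_0.
        unfold lsum; simpl. rewrite Rplus_0_r. unfold f.
        destruct (HK q (HP q (or_introl eq_refl))) as [n [Hn Hvp]].
        pose proof (vp_bound d ds L u N (Edge u N HN HE) _ _ n Hvp).
        assert (INR n * N <= INR K * N) by (apply Rmult_le_compat_r; auto; apply le_INR; auto).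
        cbv beta. apply Rle_trans with ((INR K * N)^2); [apply pow_incr; split; [apply rdist_ge0|lra] | simpl; lra].
      - apply filt_NoDup; auto.
      - exact BadSp.
      - intros; apply BadSp; auto. }
    assert (E : INR (length Sp) * (INR K * N) ^ 2 = INR (length Sp) * (INR K * INR K) * N^2) by ring.
    assert (CE * N^2 <= ((CE + CW) * N) ^ 2).
    { replace (((CE + CW) * N) ^ 2) with ((CE+CW)*(CE+CW) * N^2) by ring. apply Rmult_le_compat_r. apply pow2_ge_0. nra. }
    assert (CE * N^2 = N^2 + INR (length Sp) * (INR K * INR K) * N^2) by (unfold CE; ring). lra. }
  split; [lra|]. split.
  { intros u v Huv l Hl. unfold I. apply Huv. apply pi_L; auto. }
  split. { intros. reflexivity. }
  split. { intros u [N HN]. exists ((CE + CW) * Rabs N). apply Henergy. apply Rabs_pos.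
     intros ls H1 H2. assert (Rabs N ^2 = N^2) by (unfold Rabs; destruct Rcase_abs; ring).
     rewrite H. apply HN; auto. }
  split. { intros u N _ HN HE. apply Henergy; auto. }
  split. { intros u _ l Hl Hr. unfold I. rewrite pi_ext; auto. }
  pose proof (rnorm_ge0 d q0).
  exists c0. split.
  { unfold c0. split. apply Rdiv_lt_0_compat; lra. apply (Rmult_le_reg_r (delta + (Rdef + rnorm q0))); [lra|].
    unfold Rdiv. rewrite Rmult_assoc, Rinv_l by lra. lra. }
  assert (Hc0 : 0 < c0 <= 1).
  { unfold c0. split. apply Rdiv_lt_0_compat; lra. apply (Rmult_le_reg_r (delta + (Rdef + rnorm q0))); [lra|].
    unfold Rdiv. rewrite Rmult_assoc, Rinv_l by lra. lra. }
  assert (Hcs : forall t s, delta <= t -> 0 <= s -> s <= t + (Rdef + rnorm q0) -> c0 * s <= t).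
  { intros t s0 H1 H2 H3. unfold c0. apply c0_lemma; auto; lra. }
  intros r Hr. exists (r + rnorm q0 + 1). split. lra.
  intros w [Hwmono [Hwpos _]] u _ M HM ls Hnd Hall. rewrite Forall_forall in Hall.
  change (lsum (fun p => w (rdist (snd p) (fst p)) * rdist (u (pi (snd p))) (u (pi (fst p)))) ls <= (CE + CW) * M).
  set (f := fun p : RV d * RV d => w (rdist (snd p) (fst p)) * rdist (u (pi (snd p))) (u (pi (fst p)))).
  set (RR := r + rnorm q0 + 1) in *.
  set (SL := fun p : RV d * RV d => L (fst p) /\ rnorm (fst p) < RR /\ L (snd p) /\ snd p <> fst p).
  set (gL := fun p : RV d * RV d => w (c0 * rdist (snd p) (fst p)) * rdist (u (snd p)) (u (fst p))).
  assert (HM' : SumLe SL gL M) by exact HM.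
  assert (HM0 : 0 <= M) by (pose proof (HM' [] (NoDup_nil _) (Forall_nil _)); simpl in H0; lra).
  assert (Wle : forall t s0, 0 <= s0 -> c0 * s0 <= t -> forall D, 0 <= D -> w t * D <= w (c0 * s0) * D).
  { intros t s0 Hs Hts D HD. apply Rmult_le_compat_r; auto. apply Hwmono. split; auto.
    apply Rmult_le_pos; lra. }
  set (E := fun p : RV d * RV d => Rdef < rnorm (fst p) /\ Rdef < rnorm (snd p)).
  rewrite (lsum_split f E).
  assert (PE : lsum f (filt E ls) <= M).
  { apply (inj_bound SL f gL (fun p => p)); auto.
    - apply filt_NoDup; auto.
    - intros x Hx. apply filt_In in Hx. destruct Hx as [Hx [E1 E2]]. destruct (Hall x Hx) as [H1 [H2 [H3 H4]]].
      unfold SL. split; [apply LhL; auto; lra|]. split; [unfold RR; lra|]. split; [apply LhL; auto; lra|auto].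
    - intros x Hx. apply filt_In in Hx. destruct Hx as [Hx [E1 E2]]. unfold f, gL. rewrite !pi_ext; auto.
      apply Wle. apply rdist_ge0. pose proof (rdist_ge0 d (snd x) (fst x)). nra. apply rdist_ge0. }
  set (ls1 := filt (fun x => ~ E x) ls).
  rewrite (lsum_split f (fun p => pi (fst p) = pi (snd p)) ls1).
  assert (PZ : lsum f (filt (fun p => pi (fst p) = pi (snd p)) ls1) = 0).
  { apply lsum_zero. intros x Hx. apply filt_In in Hx. destruct Hx as [_ Hx]. unfold f. rewrite Hx, rdist_refl. ring. }
  set (ls2 := filt (fun p => ~ pi (fst p) = pi (snd p)) ls1).
  rewrite (lsum_split f (fun p => Rdef < rnorm (snd p)) ls2).
  assert (Info : forall x, In x ls2 -> In x ls /\ ~ E x /\ pi (fst x) <> pi (snd x)).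
  { intros x Hx. unfold ls2 in Hx. apply filt_In in Hx. destruct Hx as [Hx H1]. unfold ls1 in Hx.
    apply filt_In in Hx. tauto. }
  assert (PIE : lsum f (filt (fun p => Rdef < rnorm (snd p)) ls2) <= INR (length Int) * M).
  { apply (group_bound fst (fun p => Lh d A (fst p) /\ rnorm (fst p) <= Rdef /\ Lh d A (snd p) /\
       Rdef < rnorm (snd p) /\ snd p <> fst p /\ snd p <> q0) f M HM0).
    - intros q ls' Hnd' HP Hk. apply (inj_bound SL f gL (fun p => (q0, snd p))); auto.
      + intros x Hx. destruct (HP x Hx) as [H1 [H2 [H3 [H4 [H5 H6]]]]]. unfold SL; simpl.
        split; auto. split. unfold RR; lra. split; [apply LhL; auto; lra|auto].
      + intros [x1 x2] [y1 y2] Hx Hy Hxy. pose proof (Hk _ Hx). pose proof (Hk _ Hy). simpl in *.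
        inversion Hxy. subst. reflexivity.
      + intros x Hx. destruct (HP x Hx) as [H1 [H2 [H3 [H4 [H5 H6]]]]]. unfold f, gL; simpl.
        rewrite (pi_ext (snd x)), (pi_int (fst x)) by (auto; lra).
        pose proof (rdist_tri d (snd x) (fst x) q0). pose proof (rdist_le_norms d (fst x) q0).
        pose proof (Hdl _ _ H1 H3 H5).
        apply Wle. apply rdist_ge0. apply Hcs; auto. apply rdist_ge0. lra. apply rdist_ge0.
    - unfold ls2, ls1. repeat apply filt_NoDup; auto.
    - intros x Hx. apply filt_In in Hx. destruct Hx as [Hx Hm]. destruct (Info x Hx) as [H0 [HE HZ]].
      destruct (Hall x H0) as [H1 [H2 [H3 H4]]].
      assert (Hl : ~ Rdef < rnorm (fst x)) by (intros Hl; apply HE; split; auto).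
      split; auto. split; [apply Rnot_lt_le; auto|]. split; auto. split; auto. split; auto.
      intros Heq. apply HZ. rewrite (pi_int (fst x)), (pi_ext (snd x)); auto.
    - intros x Hx. apply filt_In in Hx. destruct Hx as [Hx Hm]. destruct (Info x Hx) as [H0 [HE HZ]].
      destruct (Hall x H0) as [H1 [H2 [H3 H4]]].
      assert (Hl : ~ Rdef < rnorm (fst x)) by (intros Hl; apply HE; split; auto).
      apply HInt; auto. apply Rnot_lt_le; auto. }
  assert (PEI : lsum f (filt (fun p => ~ Rdef < rnorm (snd p)) ls2) <= INR (length Int) * M).
  { apply (group_bound snd (fun p => Lh d A (fst p) /\ Rdef < rnorm (fst p) /\ rnorm (fst p) < r /\ Lh d A (snd p) /\
       rnorm (snd p) <= Rdef /\ snd p <> fst p /\ fst p <> q0) f M HM0).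
    - intros q ls' Hnd' HP Hk. apply (inj_bound SL f gL (fun p => (fst p, q0))); auto.
      + intros x Hx. destruct (HP x Hx) as [H1 [H2 [H3 [H4 [H5 [H6 H7]]]]]]. unfold SL; simpl.
        split; [apply LhL; auto; lra|]. split. unfold RR; lra. split; auto.
      + intros [x1 x2] [y1 y2] Hx Hy Hxy. pose proof (Hk _ Hx). pose proof (Hk _ Hy). simpl in *.
        inversion Hxy. subst. reflexivity.
      + intros x Hx. destruct (HP x Hx) as [H1 [H2 [H3 [H4 [H5 [H6 H7]]]]]]. unfold f, gL; simpl.
        rewrite (pi_ext (fst x)), (pi_int (snd x)) by (auto; lra).
        pose proof (rdist_tri d q0 (snd x) (fst x)). pose proof (rdist_le_norms d q0 (snd x)).
        pose proof (Hdl _ _ H1 H4 H6).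
        apply Wle. apply rdist_ge0. apply Hcs; auto. apply rdist_ge0. lra. apply rdist_ge0.
    - unfold ls2, ls1. repeat apply filt_NoDup; auto.
    - intros x Hx. apply filt_In in Hx. destruct Hx as [Hx Hm]. destruct (Info x Hx) as [H0 [HE HZ]].
      destruct (Hall x H0) as [H1 [H2 [H3 H4]]].
      assert (Hl : Rdef < rnorm (fst x)).
      { apply NNPP. intros Hl. apply HZ. rewrite (pi_int (fst x)), (pi_int (snd x)); auto. }
      split; auto. split; auto. split; auto. split; auto. split; [apply Rnot_lt_le; auto|]. split; auto.
      intros Heq. apply HZ. rewrite (pi_int (snd x)), (pi_ext (fst x)); auto.
    - intros x Hx. apply filt_In in Hx. destruct Hx as [Hx Hm]. destruct (Info x Hx) as [H0 [HE HZ]].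
      destruct (Hall x H0) as [H1 [H2 [H3 H4]]].
      apply HInt; auto. apply Rnot_lt_le; auto. }
  assert (CW * M <= (CE + CW) * M) by (apply Rmult_le_compat_r; lra).
  assert (CW * M = M + 2 * (INR (length Int) * M)) by (unfold CW; ring). lra.
Qed.
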